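(* For each finite set $\tau\subseteq\mathbb{S}$ of source labels, the set of graphs $\mathcal{G}^\tau_{\mathrm{gen}}$ is context-free.
   Context: Fix a countably infinite set $\mathbb{S}$ of source labels and a set $\mathbb{A}$ of edge labels with arities $\ge1$. Graphs of sort $\tau$ are isomorphism classes of finite $\mathbb{A}$-labelled hypergraphs with an injective map from $\tau$ into the vertices (sources). HR operations: constants $\mathbf{0}_\tau$ (sources only) and $\mathbf{a}_{(s_1,\ldots,s_{\#a})}$ (single $a$-edge on the $s_i$-sources); unary $\mathsf{restrict}_\tau$ (forget source labels outside $\tau$), $\mathsf{rename}_\alpha$ ($\alpha$ a finite permutation of $\mathbb{S}$, relabelling sources), binary $\parallel$ (disjoint union fusing equally labelled sources). $\mathcal{G}^\tau_{\mathrm{gen}}$ is the set of values of ground terms using only $\mathbf{0}_{\tau'}$ ($\tau'\subseteq\tau$), $\mathbf{a}_{(s_1,\ldots)}$ ($s_i\in\tau$), $\mathsf{restrict}_{\tau'}$ ($\tau'\subseteq\tau$), $\mathsf{rename}_\alpha$ ($\alpha$ fixing all elements outside $\tau$) and $\parallel$. A grammar is a finite set of rules $U\to t$ with $U$ a nonterminal and $t$ a term over HR operations whose variables are nonterminals; a set of graphs is context-free if it is the component of some nonterminal in the least solution of a grammar (terms evaluated on sets by lifting). *)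

(* Defs.v *)
From Stdlib Require Lists.List.
From mathcomp Require Import all_boot.
Set Implicit Arguments. Unset Strict Implicit. Unset Printing Implicit Defensive.

(* Source labels S := nat (countably infinite).  Finite sets of source labels
   (sorts) are represented by sequences, only membership matters.
   Edge labels: a finite type A with arity ar : A -> nat. *)

Section HR.
Variables (A : finType) (ar : A -> nat).

(* Concrete hypergraphs: a (duplicate-free) list of vertices (natural numbers),
   a list (multiset) of labelled hyperedges (label, attachment sequence), and a
   list of sources (source label, vertex), injective in both components.
   Graphs in the paper's sense are isomorphism classes of these. *)
Record graph := Graph {
  gverts : seq nat;
  gedges : seq (A * seq nat);
  gsrc   : seq (nat * nat) }.

Definition iso (g h : graph) : Prop :=
  exists f : nat -> nat,
    {in gverts g &, injective f} /\
    perm_eq (map f (gverts g)) (gverts h) /\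
    perm_eq [seq (e.1, map f e.2) | e <- gedges g] (gedges h) /\
    perm_eq [seq (p.1, f p.2) | p <- gsrc g] (gsrc h).

Record fperm := FPerm {
  fperm_fun :> nat -> nat;
  fperm_bij : bijective fperm_fun;
  fperm_fin : exists n0, forall n, n0 <= n -> fperm_fun n = n }.

Definition hr_zero (tau : seq nat) : graph :=
  Graph (undup tau) [::] [seq (s, s) | s <- undup tau].

Definition hr_edge (a : A) (ss : seq nat) : graph :=
  Graph (undup ss) [:: (a, ss)] [seq (s, s) | s <- undup ss].

Definition hr_restrict (tau : seq nat) (g : graph) : graph :=
  Graph (gverts g) (gedges g) [seq p <- gsrc g | p.1 \in tau].

Definition hr_rename (alpha : fperm) (g : graph) : graph :=
  Graph (gverts g) (gedges g) [seq (alpha p.1, p.2) | p <- gsrc g].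

Definition src_vert (g : graph) (s : nat) : option nat :=
  ohead [seq p.2 | p <- gsrc g & p.1 == s].
Definition vert_lab (g : graph) (v : nat) : option nat :=
  ohead [seq p.1 | p <- gsrc g & p.2 == v].

(* parallel composition: disjoint union fusing equally labelled sources;
   the vertices of h are shifted beyond those of g, except the h-sources
   whose label is also a source label of g, which are sent to that source *)
Definition par_map (g h : graph) (v : nat) : nat :=
  let off := (foldr maxn 0 (gverts g)).+1 in
  match vert_lab h v with
  | Some s => match src_vert g s with Some u => u | None => v + off end
  | None => v + off
  end.

Definition hr_par (g h : graph) : graph :=
  let m := par_map g h in
  Graph (gverts g ++ [seq m v | v <- gverts h & m v \notin gverts g])
        (gedges g ++ [seq (e.1, map m e.2) | e <- gedges h])
        (gsrc g ++ [seq (p.1, m p.2) | p <- gsrc h & p.1 \notin unzip1 (gsrc g)]).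

Inductive term (N : Type) : Type :=
| TVar of N
| TZero of seq nat
| TEdge (a : A) of (ar a).-tuple nat
| TRestrict of seq nat & term N
| TRename of fperm & term N
| TPar of term N & term N.

Fixpoint value (t : term void) : graph :=
  match t with
  | TVar x => match x with end
  | TZero tau => hr_zero tau
  | TEdge a ss => hr_edge a ss
  | TRestrict tau t => hr_restrict tau (value t)
  | TRename al t => hr_rename al (value t)
  | TPar t1 t2 => hr_par (value t1) (value t2)
  end.

Fixpoint eval_set (N : Type) (sigma : N -> graph -> Prop) (t : term N)
  : graph -> Prop :=
  match t with
  | TVar x => sigma x
  | TZero tau => fun g => g = hr_zero tau
  | TEdge a ss => fun g => g = hr_edge a ss
  | TRestrict tau t => fun g => exists g', eval_set sigma t g' /\ g = hr_restrict tau g'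
  | TRename al t => fun g => exists g', eval_set sigma t g' /\ g = hr_rename al g'
  | TPar t1 t2 => fun g => exists g1 g2,
      eval_set sigma t1 g1 /\ eval_set sigma t2 g2 /\ g = hr_par g1 g2
  end.

Definition grammar (N : Type) := seq (N * term N).

Definition least_sol (N : Type) (R : grammar N) (U : N) (g : graph) : Prop :=
  forall sigma : N -> graph -> Prop,
    (forall r, Stdlib.Lists.List.In r R -> forall g', eval_set sigma r.2 g' -> sigma r.1 g') ->
    sigma U g.

(* two sets of concrete graphs denote the same set of isomorphism classes *)
Definition same_classes (L1 L2 : graph -> Prop) : Prop :=
  (forall g, L1 g -> exists h, L2 h /\ iso g h) /\
  (forall h, L2 h -> exists g, L1 g /\ iso g h).

Definition context_free (L : graph -> Prop) : Prop :=
  exists (N : finType) (R : grammar N) (U : N), same_classes (least_sol R U) L.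

Fixpoint gen_term (tau : seq nat) (t : term void) : Prop :=
  match t with
  | TVar _ => False
  | TZero tau' => {subset tau' <= tau}
  | TEdge a ss => all (fun s => s \in tau) ss
  | TRestrict tau' t => {subset tau' <= tau} /\ gen_term tau t
  | TRename al t => (forall s, s \notin tau -> al s = s) /\ gen_term tau t
  | TPar t1 t2 => gen_term tau t1 /\ gen_term tau t2
  end.

Definition G_gen (tau : seq nat) (g : graph) : Prop :=
  exists t : term void, gen_term tau t /\ g = value t.

End HR.

(* Main.v *)
Require Import Defs.
From mathcomp Require Import all_boot.
From Stdlib Require List.
Set Implicit Arguments. Unset Strict Implicit.

Lemma In_mem (T : eqType) (x : T) (s : seq T) : List.In x s <-> x \in s.
Proof.
elim: s => [|y s IH] //=; rewrite in_cons; split.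
- by case=> [->|/IH ->]; rewrite ?eqxx ?orbT.
- by case/orP=> [/eqP->|/IH]; [left|right].
Qed.

Fixpoint seqsn (u : seq nat) (k : nat) : seq (seq nat) :=
  if k is k'.+1 then [seq x :: s | x <- u, s <- seqsn u k'] else [:: [::]].

Lemma mem_seqsn u k s : (s \in seqsn u k) = (size s == k) && all (mem u) s.
Proof.
elim: k s => [|k IH] [|x s] //=.
- by apply/negbTE/allpairsP; case=> [[y t]] /= [_ _].
- apply/allpairsP/and3P.
  + case=> [[y t]] /= [yu tk [-> ->]]; move: tk; rewrite IH => /andP[/eqP -> ->].
    by rewrite eqxx yu.
  + case=> [sk xu su]; exists (x, s); split=> //=; by rewrite IH su -eqSS sk.
Qed.

Definition pf (u img : seq nat) (n : nat) : nat :=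
  if uniq u && perm_eq img u && (n \in u) then nth 0 img (index n u) else n.
Definition pg (u img : seq nat) (n : nat) : nat :=
  if uniq u && perm_eq img u && (n \in img) then nth 0 u (index n img) else n.

Lemma pfK u img : cancel (pf u img) (pg u img).
Proof.
move=> n; rewrite /pf /pg.
case: (boolP (uniq u && perm_eq img u)) => //= /andP[Uu P].
have Ui : uniq img by rewrite (perm_uniq P).
have Si := perm_size P. have Mi := perm_mem P.
case: (boolP (n \in u)) => nu /=; last by rewrite Mi (negbTE nu).
have lt : index n u < size img by rewrite Si index_mem.
by rewrite mem_nth // index_uniq // nth_index.
Qed.

Lemma pgK u img : cancel (pg u img) (pf u img).
Proof.
move=> n; rewrite /pf /pg.
case: (boolP (uniq u && perm_eq img u)) => //= /andP[Uu P].
have Ui : uniq img by rewrite (perm_uniq P).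
have Si := perm_size P. have Mi := perm_mem P.
case: (boolP (n \in img)) => nu /=; last by rewrite -Mi (negbTE nu).
have lt : index n img < size u by rewrite -Si index_mem.
by rewrite mem_nth // index_uniq // nth_index.
Qed.

Lemma sumn_ge (u : seq nat) n : n \in u -> n <= sumn u.
Proof.
elim: u => [|x u IH] //=; rewrite in_cons => /orP[/eqP->|/IH h].
- exact: leq_addr.
- exact: leq_trans h (leq_addl _ _).
Qed.

Lemma pf_fin u img : exists n0, forall n, n0 <= n -> pf u img n = n.
Proof.
exists (sumn u).+1 => n hn; rewrite /pf.
case: (boolP (n \in u)) => nu; last by rewrite andbF.
by have := sumn_ge nu; rewrite leqNgt hn.
Qed.

Definition mkperm (u img : seq nat) : fperm :=
  FPerm (Bijective (@pfK u img) (@pgK u img)) (pf_fin u img).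

Lemma mkperm_fix u img n : n \notin u -> mkperm u img n = n.
Proof. by move=> nu; rewrite /= /pf (negbTE nu) andbF. Qed.

Lemma mkperm_alpha (tau : seq nat) (al : fperm) :
  (forall s, s \notin tau -> al s = s) ->
  let u := undup tau in
  (map al u \in seqsn u (size u)) /\ forall n, mkperm u (map al u) n = al n.
Proof.
move=> Hfix u.
have inj : injective al by case: (fperm_bij al) => g h1 h2; exact: can_inj h1.
have Uu : uniq u := undup_uniq tau.
have sub : {subset map al u <= u}.
  move=> y /mapP[x xu ->]; apply/negPn/negP => ny.
  have : al (al x) = al x by apply: Hfix; rewrite -mem_undup.
  move/inj => e; move: ny; rewrite e; by rewrite xu.
have Um : uniq (map al u) by rewrite map_inj_uniq.
have [_ eqm] := uniq_min_size Um sub (eq_leq (esym (size_map al u))).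
have P : perm_eq (map al u) u by apply: uniq_perm.
split.
- rewrite mem_seqsn size_map eqxx /=; exact/allP.
- move=> n; rewrite /= /pf Uu P /=.
  case: (boolP (n \in u)) => nu.
  + by rewrite (nth_map 0) ?index_mem // nth_index.
  + by rewrite Hfix // -mem_undup.
Qed.

Section Main.
Variables (A : finType) (ar : A -> nat) (tau : seq nat).

Let u := undup tau.
Definition zs := [seq s | k <- iota 0 (size u).+1, s <- seqsn u k].
Definition edgetup (a : A) (s : seq nat) : (ar a).-tuple nat :=
  insubd (nseq_tuple (ar a) 0) s.

Definition rules : grammar ar unit :=
  List.app (List.map (fun s => (tt, TZero ar unit s)) zs)
  (List.app (List.flat_map (fun a => List.map (fun s => (tt, TEdge unit (edgetup a s))) (seqsn u (ar a))) (enum A))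
  (List.app (List.map (fun s => (tt, TRestrict s (TVar ar tt))) zs)
  (List.app (List.map (fun img => (tt, TRename (mkperm u img) (TVar ar tt))) (seqsn u (size u)))
   [:: (tt, TPar (TVar ar tt) (TVar ar tt))]))).

Lemma zs_mem s : uniq s -> {subset s <= tau} -> s \in zs.
Proof.
move=> Us sub; apply/allpairsPdep; exists (size s), s; split=> //.
- rewrite mem_iota /= add0n ltnS; apply: uniq_leq_size => // x xs.
  by rewrite /u mem_undup sub.
- rewrite mem_seqsn eqxx /=; apply/allP => x xs; have : x \in u by rewrite /u mem_undup sub. done.
Qed.

Lemma zs_inv s : s \in zs -> {subset s <= tau}.
Proof.
case/allpairsPdep => k [t [_ + ->]]; rewrite mem_seqsn => /andP[_ /allP h] x xt.
by rewrite -(mem_undup tau); exact: h.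
Qed.

Lemma all_undup (s : seq nat) : all (mem (undup tau)) s -> all (fun x => x \in tau) s.
Proof.
move/allP=> h; apply/allP=> x /h hx.
have : x \in undup tau by []. by rewrite mem_undup.
Qed.

Lemma iso_refl (g : graph A) : iso g g.
Proof.
exists id; split; first by [].
rewrite map_id; split; first exact: perm_refl.
have -> : [seq (e.1, map id e.2) | e <- gedges g] = gedges g.
  by elim: (gedges g) => //= [[a s] l ->]; rewrite map_id.
split; first exact: perm_refl.
have -> : [seq (p.1, id p.2) | p <- gsrc g] = gsrc g.
  by elim: (gsrc g) => //= [[a s] l ->].
exact: perm_refl.
Qed.

Lemma dir1 g : least_sol rules tt g -> G_gen ar tau g.
Proof.
move=> H; apply: (H (fun _ => G_gen ar tau)) => -[[] t] HIn g'.
rewrite !List.in_app_iff in HIn.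
case: HIn => [|[|[|[|]]]] HIn.
- have [s [[<-] /In_mem /zs_inv sub]] := proj1 (List.in_map_iff _ _ _) HIn.
  move=> /= ->; by exists (TZero ar void s).
- have [a [_ H2]] := proj1 (List.in_flat_map _ _ _) HIn.
  have [s [[<-] /In_mem]] := proj1 (List.in_map_iff _ _ _) H2.
  rewrite mem_seqsn => /andP[/eqP sz su] /= ->.
  exists (TEdge void (edgetup a s)); split=> //=.
  rewrite /edgetup insubdK; [exact: (all_undup su) | by rewrite -topredE /= sz].
- have [s [[<-] /In_mem /zs_inv sub]] := proj1 (List.in_map_iff _ _ _) HIn.
  move=> /= [g1 [[t1 [gt1 ->]] ->]].
  by exists (TRestrict s t1).
- have [img [[<-] _]] := proj1 (List.in_map_iff _ _ _) HIn.
  move=> /= [g1 [[t1 [gt1 ->]] ->]].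
  exists (TRename (mkperm u img) t1); split=> //=; split=> // n nt.
  by apply: mkperm_fix; rewrite mem_undup.
- case: HIn => // -[<-] /= [g1 [g2 [[t1 [gt1 ->]] [[t2 [gt2 ->]] ->]]]].
  by exists (TPar t1 t2).
Qed.

Lemma In_rules t : List.In (tt, t) rules -> forall (sigma : unit -> graph A -> Prop),
  (forall r, List.In r rules -> forall g', eval_set sigma r.2 g' -> sigma r.1 g') ->
  forall g, eval_set sigma t g -> sigma tt g.
Proof. by move=> HIn sigma Hcl g; apply: (Hcl (tt, t)). Qed.

Lemma dir2 g : G_gen ar tau g -> least_sol rules tt g.
Proof.
case=> t [gt ->] sigma Hcl.
have app t' g' : List.In (tt, t') rules -> eval_set sigma t' g' -> sigma tt g'.
  by move=> HIn; apply: (Hcl (tt, t')).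
elim: t gt => [[]|tau' sub|a ss sst|tau' t IH [sub gt]|al t IH [fx gt]|t1 IH1 t2 IH2 [gt1 gt2]] /=.
- have -> : hr_zero A tau' = hr_zero A (undup tau') by rewrite /hr_zero (undup_id (undup_uniq tau')).
  apply: (app (TZero ar unit (undup tau'))) => //.
  rewrite List.in_app_iff; left; apply: List.in_map; apply/In_mem.
  by apply: zs_mem; [exact: undup_uniq | move=> x; rewrite mem_undup; exact: sub].
- have -> : hr_edge a ss = hr_edge a (edgetup a ss) by rewrite /edgetup valKd.
  apply: (app (TEdge unit (edgetup a ss))) => //.
  rewrite List.in_app_iff; right; rewrite List.in_app_iff; left.
  apply/List.in_flat_map; exists a; split; first by apply/In_mem; rewrite mem_enum.
  apply: List.in_map; apply/In_mem; rewrite mem_seqsn size_tuple eqxx /=.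
  apply/allP => x xs; have : x \in u by rewrite /u mem_undup (allP sst). done.
- apply: (app (TRestrict (undup tau') (TVar ar tt))).
    do 2 (rewrite List.in_app_iff; right); rewrite List.in_app_iff; left.
    apply: List.in_map; apply/In_mem.
    by apply: zs_mem; [exact: undup_uniq | move=> x; rewrite mem_undup; exact: sub].
  exists (value t); split; first exact: IH.
  rewrite /hr_restrict; congr Graph; apply: eq_filter => p; by rewrite mem_undup.
- have [Hm Heq] := mkperm_alpha fx.
  apply: (app (TRename (mkperm u (map al u)) (TVar ar tt))).
    do 3 (rewrite List.in_app_iff; right); rewrite List.in_app_iff; left.
    by apply: List.in_map; apply/In_mem.
  exists (value t); split; first exact: IH.
  rewrite /hr_rename; congr Graph; apply: eq_map => p; by rewrite Heq.
- apply: (app (TPar (TVar ar tt) (TVar ar tt))).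
    do 4 (rewrite List.in_app_iff; right); by left.
  by exists (value t1), (value t2); split; [exact: IH1 | split; [exact: IH2|]].
Qed.

End Main.

Theorem proposition5p1 (A : finType) (ar : A -> nat)
  (har : forall a : A, 0 < ar a) (tau : seq nat) :
  context_free ar (G_gen ar tau).
Proof.
exists unit, (rules ar tau), tt; split=> g H; exists g; split; try exact: iso_refl.
- exact: dir1.
- exact: dir2.
Qed.
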